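(* Let $\mathcal H$ be a Hilbert space of finite dimension $d$, let $\{|e_s\rangle\}_{s=0}^{d-1}$ be an orthonormal basis of $\mathcal H$, let $\{\lambda_s\}_{s=0}^{d-1}$ be a probability distribution, and let $V=\sum_{s=0}^{d-1}\exp\!\left(i\frac{2\pi s}{d}\right)|e_s\rangle\langle e_s|$. Let $\Phi$ be the phase damping channel $\Phi(\rho)=\sum_{j=0}^{d-1}\lambda_j V^j\rho V^{*j}$ on $\mathfrak S(\mathcal H)$. Let $\mathcal A$ be the set of states on $\mathcal H$ that can be written as convex combinations of pure states $|f\rangle\langle f|$ satisfying $|\langle f|e_s\rangle|=\frac{1}{\sqrt d}$ for all $0\le s\le d-1$. Then for every $\rho\in\mathcal A$, $$H_\Phi(\rho)\le -\sum_{j=0}^{d-1}\lambda_j\log\lambda_j .$$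
   Context: $\mathfrak S(\mathcal H)$ denotes the set of density operators (positive, unit-trace operators) on $\mathcal H$, and $S(\sigma)=-\mathrm{Tr}(\sigma\log\sigma)$ is the von Neumann entropy. For a quantum channel (completely positive trace-preserving linear map) $\Phi$ with input space $\mathcal H$, and $\rho\in\mathfrak S(\mathcal H)$, $H_\Phi(\rho):=\min\sum_{j=1}^k\pi_jS(\Phi(\rho_j))$, where the minimum is over all finite decompositions $\rho=\sum_{j=1}^k\pi_j\rho_j$ with $\{\pi_j\}$ a probability distribution and $\rho_j\in\mathfrak S(\mathcal H)$. *)

(* Defs.v *)
From HB Require Import structures.
From mathcomp Require Import all_boot all_order all_algebra.
From mathcomp Require Import complex.
From mathcomp Require Import boolp reals exp trigo.
Set Implicit Arguments. Unset Strict Implicit. Unset Printing Implicit Defensive.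
Import Order.TTheory GRing.Theory Num.Theory.
Local Open Scope ring_scope.
Local Open Scope complex_scope.

Section QDefs.
Variables (R : realType) (d : nat).
Local Notation C := R[i].
Local Notation M := 'M[C]_d.

Definition adjmx m n (A : 'M[C]_(m, n)) : 'M[C]_(n, m) := (map_mx (@conjc R) A)^T.

Definition psd (A : M) : Prop :=
  adjmx A = A /\ forall v : 'cV[C]_d, 0 <= (adjmx v *m A *m v) 0 0.

Definition density (A : M) : Prop := psd A /\ \tr A = 1.

Definition unitary (U : M) : Prop := U *m adjmx U = 1%:M.

Definition spectral_decomp (A : M) (p : M * 'rV[R]_d) : Prop :=
  unitary p.1 /\ A = p.1 *m diag_mx (map_mx (fun x => x%:C) p.2) *m adjmx p.1.

(* von Neumann entropy S(A) = - Tr (A log A) = - sum_i mu_i ln mu_i over the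
   eigenvalues mu_i of A (convention 0 ln 0 = 0; MathComp-Analysis has ln 0 = 0). *)
Definition entropy (A : M) : R :=
  match pselect (exists p, spectral_decomp A p) with
  | left h => let p := projT1 (cid h) in - \sum_(i < d) p.2 0 i * ln (p.2 0 i)
  | right _ => 0
  end.

(* H_Phi(rho) <= c : since H_Phi(rho) is a minimum over finite decompositions
   rho = sum_j pi_j rho_j, this holds iff some decomposition achieves <= c. *)
Definition HPhi_le (Phi : M -> M) (rho : M) (c : R) : Prop :=
  exists (k : nat) (pi : 'I_k -> R) (rhos : 'I_k -> M),
    [/\ forall j, 0 <= pi j, \sum_j pi j = 1, forall j, density (rhos j),
        rho = \sum_j (pi j)%:C *: rhos j
      & \sum_j pi j * entropy (Phi (rhos j)) <= c].

End QDefs.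

Definition mxpow (R : realType) (d : nat) (V : 'M[R[i]]_d) (j : nat) : 'M[R[i]]_d :=
  iter j (mulmx V) 1%:M.

(* Main.v *)
Require Import Defs.
From HB Require Import structures.
From mathcomp Require Import all_boot all_order all_algebra.
From mathcomp Require Import complex.
From mathcomp Require Import boolp reals exp trigo sequences.
From mathcomp Require Import ring lra.
Import Order.TTheory GRing.Theory Num.Theory.
Local Open Scope ring_scope.
Local Open Scope complex_scope.

Section Aux.
Variable R : realType.
Local Notation C := R[i].

Lemma ln_le_sub1 (x : R) : 0 < x -> ln x <= x - 1.
Proof.
move=> x0; have := expR_ge1Dx (ln x); rewrite lnK ?posrE //; lra.
Qed.

Lemma pt (b mu lam : R) : 0 <= b -> 0 <= mu -> b * mu <= lam ->
  b * (mu - lam) <= b * mu * (ln mu - ln lam).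
Proof.
move=> b0 m0 bl.
have [->|bn0] := eqVneq b 0; first by rewrite !mul0r.
have [mz|mn0] := eqVneq mu 0.
  rewrite mz mulr0 mul0r sub0r mulrN oppr_le0; apply: mulr_ge0 => //.
  by move: bl; rewrite mz mulr0.
have bp : 0 < b by rewrite lt_def bn0.
have mp : 0 < mu by rewrite lt_def mn0.
have lp : 0 < lam by apply: lt_le_trans bl; apply: mulr_gt0.
rewrite -mulrA; apply: ler_wpM2l => //.
have h := ln_le_sub1 (lam / mu) (divr_gt0 lp mp).
rewrite ln_div ?posrE // in h.
have h2 : mu * (ln lam - ln mu) <= mu * (lam / mu - 1) by apply: ler_wpM2l => //; exact: ltW.
rewrite !mulrBr mulrCA mulfV ?mulr1 in h2; last by rewrite gt_eqF.
lra.
Qed.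

Lemma ent_ineq (n : nat) (b : 'I_n -> 'I_n -> R) (mu lam : 'I_n -> R) :
 (forall i j, 0 <= b i j) -> (forall i, 0 <= mu i) ->
 (forall j, lam j = \sum_i b i j * mu i) ->
 (forall i, \sum_j b i j = 1) -> (forall j, \sum_i b i j = 1) ->
 - \sum_i mu i * ln (mu i) <= - \sum_j lam j * ln (lam j).
Proof.
move=> b0 m0 hl hr hc.
have lamge i j : b i j * mu i <= lam j.
  rewrite hl (bigD1 i) //= lerDl; apply: sumr_ge0 => k _; exact: mulr_ge0.
have sB (F G : 'I_n -> 'I_n -> R) : \sum_i \sum_j (F i j - G i j) =
   \sum_i \sum_j F i j - \sum_i \sum_j G i j.
  by rewrite -sumrB; apply: eq_bigr => i _; rewrite sumrB.
have M : \sum_i \sum_j (b i j * mu i - b i j * lam j) <=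
   \sum_i \sum_j (b i j * mu i * ln (mu i) - b i j * mu i * ln (lam j)).
  apply: ler_sum => i _; apply: ler_sum => j _.
  by rewrite -mulrBr -mulrBr; apply: pt.
have E1 : \sum_i \sum_j b i j * mu i * ln (mu i) = \sum_i mu i * ln (mu i).
  apply: eq_bigr => i _; under eq_bigr do rewrite -mulrA.
  by rewrite -mulr_suml hr mul1r.
have E2 : \sum_i \sum_j b i j * mu i * ln (lam j) = \sum_j lam j * ln (lam j).
  rewrite exchange_big; apply: eq_bigr => j _; by rewrite -mulr_suml -hl.
have E3 : \sum_i \sum_j b i j * mu i = \sum_i mu i.
  by apply: eq_bigr => i _; rewrite -mulr_suml hr mul1r.
have E4 : \sum_i \sum_j b i j * lam j = \sum_j lam j.
  by rewrite exchange_big; apply: eq_bigr => j _; rewrite -mulr_suml hc mul1r.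
have E5 : \sum_j lam j = \sum_i mu i.
  under eq_bigr do rewrite hl.
  by rewrite exchange_big; apply: eq_bigr => i _; rewrite -mulr_suml hr mul1r.
rewrite !sB E1 E2 E3 E4 E5 in M.
lra.
Qed.

End Aux.

Section Mx.
Variable R : realType.
Local Notation C := R[i].

Definition sqn (z : C) : R := (complex.Re z) ^+ 2 + (complex.Im z) ^+ 2.

Lemma sqn_ge0 z : 0 <= sqn z.
Proof. by rewrite /sqn addr_ge0 // sqr_ge0. Qed.

Lemma mulcJ (z : C) : z * conjc z = (sqn z)%:C.
Proof. case: z => a b; rewrite /sqn /=; apply/eqP; rewrite eq_complex /=.
apply/andP; split; apply/eqP; ring. Qed.

Lemma sqnJ (z : C) : sqn (conjc z) = sqn z.
Proof. case: z => a b; rewrite /sqn /=; ring. Qed.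

Lemma adjE m n (A : 'M[C]_(m,n)) i j : adjmx A i j = conjc (A j i).
Proof. by rewrite !mxE. Qed.

Lemma adjmxM m n p (A : 'M[C]_(m,n)) (B : 'M[C]_(n,p)) :
  adjmx (A *m B) = adjmx B *m adjmx A.
Proof. by rewrite /adjmx map_mxM trmx_mul. Qed.

Lemma adjmxK m n (A : 'M[C]_(m,n)) : adjmx (adjmx A) = A.
Proof. by apply/matrixP => i j; rewrite !adjE conjcK. Qed.

Lemma rC_mul (x y : R) : x%:C * y%:C = (x * y)%:C.
Proof. by rewrite rmorphM. Qed.

Definition Dg {n} (r : 'rV[R]_n) : 'M[C]_n := diag_mx (map_mx (fun x => x%:C) r).

Lemma quad_entry n (X : 'M[C]_n) (r : 'rV[R]_n) i :
  (X *m Dg r *m adjmx X) i i = (\sum_j r 0 j * sqn (X i j))%:C.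
Proof.
rewrite mxE rmorph_sum; apply: eq_bigr => j _.
rewrite mul_mx_diag !mxE /= mulrAC mulcJ mulrC rC_mul //.
Qed.

Lemma norm_entry n (X : 'M[C]_n) i :
  (X *m adjmx X) i i = (\sum_j sqn (X i j))%:C.
Proof.
rewrite mxE rmorph_sum; apply: eq_bigr => j _.
by rewrite !mxE mulcJ.
Qed.

Lemma key n (W U : 'M[C]_n) (lr mr : 'rV[R]_n) :
  adjmx W *m W = 1%:M -> U *m adjmx U = 1%:M -> (forall j, 0 <= lr 0 j) ->
  W *m Dg lr *m adjmx W = U *m Dg mr *m adjmx U ->
  - \sum_i mr 0 i * ln (mr 0 i) <= - \sum_j lr 0 j * ln (lr 0 j).
Proof.
move=> hW hU l0 hE.
have hUU := mulmx1C hU; have hWW := mulmx1C hW.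
set Q := adjmx U *m W.
have adjQ : adjmx Q = adjmx W *m U by rewrite adjmxM adjmxK.
have QQ : Q *m adjmx Q = 1%:M.
  by rewrite adjQ /Q mulmxA -(mulmxA _ W) hWW mulmx1 hUU.
have QQ' : adjmx Q *m Q = 1%:M.
  by rewrite adjQ /Q mulmxA -(mulmxA _ U) hU mulmx1 hW.
have EM : Q *m Dg lr *m adjmx Q = Dg mr.
  rewrite adjQ /Q.
  have e : adjmx U *m W *m Dg lr *m (adjmx W *m U) = adjmx U *m (W *m Dg lr *m adjmx W) *m U by rewrite !mulmxA.
  by rewrite e hE !mulmxA hUU mul1mx -mulmxA hUU mulmx1.
have EL : adjmx Q *m Dg mr *m Q = Dg lr.
  rewrite adjQ /Q.
  have e : adjmx W *m U *m Dg mr *m (adjmx U *m W) = adjmx W *m (U *m Dg mr *m adjmx U) *m W by rewrite !mulmxA.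
  by rewrite e -hE !mulmxA hW mul1mx -mulmxA hW mulmx1.
have dg (r : 'rV[R]_n) i : Dg r i i = (r 0 i)%:C by rewrite !mxE eqxx mulr1n.
have one1 i : (1%:M : 'M[C]_n) i i = (1 : R)%:C by rewrite mxE eqxx rmorph1.
apply: (@ent_ineq R n (fun i j => sqn (Q i j))).
- by move=> i j; exact: sqn_ge0.
- move=> i; have := quad_entry _ Q lr i; rewrite EM dg => /complexI ->.
  by apply: sumr_ge0 => j _; apply: mulr_ge0 => //; exact: sqn_ge0.
- move=> j; have := quad_entry _ (adjmx Q) mr j; rewrite adjmxK EL dg => /complexI ->.
  by apply: eq_bigr => i _; rewrite adjE sqnJ mulrC.
- by move=> i; have := norm_entry _ Q i; rewrite QQ one1 => /complexI <-.
- move=> j; have := norm_entry _ (adjmx Q) j; rewrite adjmxK QQ' one1 => /complexI ->.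
  by apply: eq_bigr => i _; rewrite adjE sqnJ.
Qed.

End Mx.

Section Four.
Variable R : realType.
Local Notation C := R[i].
Variable d : nat.

Lemma conjcM (a b : C) : conjc (a * b) = conjc a * conjc b.
Proof. exact: rmorphM. Qed.
Lemma conjcX (a : C) n : conjc (a ^+ n) = conjc a ^+ n.
Proof. exact: rmorphXn. Qed.

Lemma demoivre (x : R) n : (cos x +i* sin x) ^+ n = cos (n%:R * x) +i* sin (n%:R * x).
Proof.
elim: n => [|n IH]; first by rewrite mul0r cos0 sin0.
rewrite exprS IH /= mulrSr mulrDl mul1r cosD sinD.
congr Complex; ring.
Qed.

Definition th : R := 2 * pi / d%:R.
Definition om : C := cos th +i* sin th.

Lemma om_pow (s : nat) : om ^+ s = cos (2 * pi * s%:R / d%:R) +i* sin (2 * pi * s%:R / d%:R).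
Proof.
rewrite /om demoivre /th.
have -> : s%:R * (2 * pi / d%:R) = 2 * pi * s%:R / d%:R :> R by ring.
by [].
Qed.

Lemma conj_om : conjc om * om = 1.
Proof.
rewrite mulrC mulcJ /sqn /om /=.
by rewrite cos2Dsin2.
Qed.

Lemma om_d : (0 < d)%N -> om ^+ d = 1.
Proof.
move=> d0; rewrite om_pow.
have -> : 2 * pi * d%:R / d%:R = pi *+ 2 :> R.
  by rewrite -mulrA mulfV ?mulr1 ?mulr2n ?pnatr_eq0 -?lt0n //; ring.
by rewrite cos2pi sin2pi.
Qed.


Lemma cos_lt1 (x : R) : 0 < x -> x < pi *+ 2 -> cos x < 1.
Proof.
move=> x0 x2.
have pi0 := pi_gt0 R.
have cl (y : R) : 0 < y -> y <= pi -> cos y < 1.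
  move=> y0 yp; rewrite -cos0.
  have := @ltr_cos R 0 y; rewrite !in_itv /= lexx y0 yp (ltW pi0) (ltW y0) => h.
  by rewrite (h isT isT).
have [xp|xp] := leP x pi; first exact: cl.
have -> : cos x = cos (pi *+ 2 - x).
  by rewrite addrC cosD2pi cosN.
apply: cl; rewrite ?mulr2n; lra.
Qed.

Lemma om_neq1 m : (0 < m < d)%N -> om ^+ m != 1.
Proof.
case/andP=> m0 md.
have d0 : (0 < d)%N by apply: leq_trans md.
rewrite om_pow; apply/negP => /eqP [] hc _.
have : cos (2 * pi * m%:R / d%:R : R) < 1.
  have pi0 := pi_gt0 R.
  have dp : 0 < d%:R :> R by rewrite ltr0n.
  have q1 : m%:R / d%:R < 1 :> R by rewrite ltr_pdivrMr // mul1r ltr_nat.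
  have q0 : 0 < m%:R / d%:R :> R by rewrite divr_gt0 // ltr0n.
  have e : 2 * pi * m%:R / d%:R = 2 * pi * (m%:R / d%:R) :> R by rewrite mulrA.
  rewrite e; apply: (cos_lt1 (2 * pi * (m%:R / d%:R))).
    by apply: mulr_gt0 => //; apply: mulr_gt0.
  have : (2 * pi : R) * (m%:R / d%:R) < (2 * pi) * 1 by rewrite ltr_pM2l // mulr_gt0.
  by rewrite mulr1 mulr2n; lra.
by rewrite hc ltxx.
Qed.

Lemma sum_geo (z : C) : z ^+ d = 1 -> z != 1 -> \sum_(s < d) z ^+ s = 0.
Proof.
move=> zd z1; have := subrX1 z d; rewrite zd subrr => /esym /eqP.
by rewrite mulf_eq0 subr_eq0 (negbTE z1) /= => /eqP.
Qed.


Lemma orth_sum (j l : nat) : (j < d)%N -> (l < d)%N ->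
  \sum_(s < d) (conjc om ^+ j * om ^+ l) ^+ s = if j == l then d%:R else 0.
Proof.
move=> jd ld.
have d0 : (0 < d)%N by apply: leq_ltn_trans jd.
have [<-|jl] := eqVneq j l.
  rewrite -exprMn conj_om expr1n.
  under eq_bigr do rewrite expr1n.
  by rewrite sumr_const card_ord.
apply: sum_geo.
  rewrite exprMn -!exprM !(mulnC _ d) !exprM.
  by rewrite -rmorphXn om_d // rmorph1 !expr1n mulr1.
have gen a b : (a < b < d)%N -> conjc om ^+ a * om ^+ b != 1.
  case/andP=> ab bd.
  have -> : om ^+ b = om ^+ a * om ^+ (b - a) by rewrite -exprD subnKC // ltnW.
  rewrite mulrA -exprMn conj_om expr1n mul1r; apply: om_neq1.
  by rewrite subn_gt0 ab /=; apply: leq_ltn_trans (leq_subr a b) bd.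
have [lt|gt] := ltnP j l; first by apply: gen; rewrite lt ld.
have lj : (l < j)%N by rewrite ltn_neqAle eq_sym jl gt.
apply/negP => /eqP h.
have := gen l j; rewrite lj jd => /(_ isT); apply/negP/negPn/eqP.
have := congr1 conjc h; rewrite conjcM conjcX conjcX conjcK conjc1 mulrC //.
Qed.

End Four.

Section Main.
Variable R : realType.
Local Notation C := R[i].
Variable d : nat.
Variable E : 'M[C]_d.
Hypothesis hE : adjmx E *m E = 1%:M.
Local Notation w := (om R d).

Lemma conjc_sum n (F : 'I_n -> C) : conjc (\sum_i F i) = \sum_i conjc (F i).
Proof. exact: rmorph_sum. Qed.

Lemma V_eq :
  \sum_(s < d) (cos (2 * pi * s%:R / d%:R) +i* sin (2 * pi * s%:R / d%:R))
                  *: (col s E *m adjmx (col s E))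
  = E *m diag_mx (\row_s w ^+ s) *m adjmx E.
Proof.
apply/matrixP => a b; rewrite summxE mxE; apply: eq_bigr => s _.
rewrite -om_pow mul_mx_diag !mxE big_ord1 !mxE.
by rewrite mulrCA mulrA.
Qed.

Lemma Vpow (V : 'M[C]_d) : V = E *m diag_mx (\row_s w ^+ s) *m adjmx E ->
  forall j, mxpow V j = E *m diag_mx (\row_s (w ^+ s) ^+ j) *m adjmx E.
Proof.
move=> hV; elim => [|j IH].
  have -> : diag_mx (\row_s (w ^+ s) ^+ 0) = 1%:M :> 'M[C]_d.
    by apply/matrixP => a b; rewrite !mxE expr0.
  by rewrite mulmx1 /mxpow /= (mulmx1C hE).
rewrite /mxpow /= -/(mxpow V j) IH hV.
have e : E *m diag_mx (\row_s w ^+ s) *m adjmx E *m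
   (E *m diag_mx (\row_s (w ^+ s) ^+ j) *m adjmx E) =
   E *m diag_mx (\row_s w ^+ s) *m (adjmx E *m E) *m diag_mx (\row_s (w ^+ s) ^+ j) *m adjmx E
  by rewrite !mulmxA.
rewrite e hE mulmx1 -(mulmxA E) mulmx_diag; congr (_ *m diag_mx _ *m _).
by apply/matrixP => a b; rewrite !mxE exprS.
Qed.


Lemma natC n : (n%:R : C) = (n%:R : R)%:C.
Proof. by rewrite rmorph_nat. Qed.

Lemma gram (V : 'M[C]_d) (hV : V = E *m diag_mx (\row_s w ^+ s) *m adjmx E)
  (f : 'cV[C]_d)
  (hf : forall s : 'I_d, `|(adjmx f *m col s E) 0 0| = ((Num.sqrt (d%:R : R))^-1)%:C)
  (j l : 'I_d) :
  (adjmx (mxpow V j *m f) *m (mxpow V l *m f)) 0 0 = (j == l)%:R.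
Proof.
set c := adjmx E *m f.
have g k : mxpow V k *m f = E *m (diag_mx (\row_s (w ^+ s) ^+ k) *m c).
  by rewrite (Vpow _ hV) /c !mulmxA.
have hc s : conjc (c s 0) * c s 0 = (d%:R^-1 : R)%:C.
  have e1 : (adjmx f *m col s E) 0 0 = conjc (c s 0).
    rewrite /c !mxE conjc_sum; apply: eq_bigr => a _.
    by rewrite !mxE conjcM conjcK mulrC.
  rewrite -{2}(conjcK (c s 0)) mulcJ -e1 /sqn add_Re2_Im2 hf.
  by rewrite -rmorphXn exprVn sqr_sqrtr ?ler0n.
rewrite !g adjmxM -mulmxA (mulmxA (adjmx E)) hE mul1mx.
clearbody c.
rewrite mxE.
under eq_bigr => s _ do rewrite !mul_diag_mx !mxE conjcM !conjcX mulrACA hc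
   -!exprM !(mulnC s) !exprM -exprMn.
rewrite -mulr_suml orth_sum //.
have d0 : (0 < d)%N by apply: leq_ltn_trans (ltn_ord j).
case: (eqVneq j l) => [->|jl].
  rewrite !eqxx natC rC_mul mulfV ?rmorph1 //.
  by rewrite pnatr_eq0 -lt0n.
have -> : ((j : nat) == l) = false.
  by apply/negbTE; apply: contra jl => /eqP /val_inj ->.
by rewrite mul0r.
Qed.


Lemma H_ge0 (lam : 'I_d -> R) : (forall j, 0 <= lam j) -> \sum_(j < d) lam j = 1 ->
  0 <= - \sum_(j < d) lam j * ln (lam j).
Proof.
move=> l0 l1; rewrite oppr_ge0; apply: sumr_le0 => j _.
apply: mulr_ge0_le0 => //; apply: ln_le0.
rewrite -l1 (bigD1 j) //= lerDl; exact: sumr_ge0.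
Qed.

Lemma ent_core (lam : 'I_d -> R) (V : 'M[C]_d)
  (hV : V = E *m diag_mx (\row_s w ^+ s) *m adjmx E)
  (f : 'cV[C]_d)
  (hf : forall s : 'I_d, `|(adjmx f *m col s E) 0 0| = ((Num.sqrt (d%:R : R))^-1)%:C) :
  (forall j, 0 <= lam j) -> \sum_(j < d) lam j = 1 ->
  entropy (\sum_(j < d) (lam j)%:C *: (mxpow V j *m (f *m adjmx f) *m adjmx (mxpow V j)))
   <= - \sum_(j < d) lam j * ln (lam j).
Proof.
move=> l0 l1.
set W : 'M[C]_d := \matrix_(a, j) (mxpow V j *m f) a 0.
have hW : adjmx W *m W = 1%:M.
  apply/matrixP => j l; rewrite [RHS]mxE -(gram _ hV _ hf j l) !mxE; apply: eq_bigr => a _.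
  by rewrite !mxE.
have eg j : mxpow V j *m (f *m adjmx f) *m adjmx (mxpow V j) =
    (mxpow V j *m f) *m adjmx (mxpow V j *m f) by rewrite adjmxM !mulmxA.
have hA : \sum_(j < d) (lam j)%:C *: (mxpow V j *m (f *m adjmx f) *m adjmx (mxpow V j))
     = W *m Dg R (\row_j lam j) *m adjmx W.
  apply/matrixP => a b; rewrite summxE mxE; apply: eq_bigr => j _.
  rewrite eg /Dg mul_mx_diag !mxE big_ord1 !mxE.
  by rewrite mulrCA mulrA.
rewrite hA /entropy; case: pselect => [h|_]; last exact: H_ge0.
case: (cid h) => -[U mu] [/= hU hAU].
have h1 : forall j, 0 <= (\row_j lam j) 0 j by move=> j; rewrite mxE.
have := @key R d W U _ mu hW hU h1 hAU.
have -> : \sum_j (\row_j lam j) 0 j * ln ((\row_j lam j) 0 j) = \sum_j lam j * ln (lam j).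
  by apply: eq_bigr => j _; rewrite mxE.
by [].
Qed.

End Main.

Lemma density_pure (R : realType) (d : nat) (f : 'cV[R[i]]_d) :
  adjmx f *m f = 1%:M -> density (f *m adjmx f).
Proof.
move=> hf; split; last by rewrite mxtrace_mulC hf mxtrace1.
split; first by rewrite adjmxM adjmxK.
move=> v.
have -> : adjmx v *m (f *m adjmx f) *m v = (adjmx v *m f) *m adjmx (adjmx v *m f).
  by rewrite adjmxM adjmxK !mulmxA.
by rewrite norm_entry ler0c; apply: sumr_ge0 => j _; exact: sqn_ge0.
Qed.

Theorem proposition1 (R : realType) (d : nat) (E : 'M[R[i]]_d) (lam : 'I_d -> R) :
  (* the columns e_s := col s E form an orthonormal basis of C^d *)
  adjmx E *m E = 1%:M ->
  (* {lambda_s} is a probability distribution *)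
  (forall j, 0 <= lam j) -> \sum_(j < d) lam j = 1 ->
  let V : 'M[R[i]]_d :=
    \sum_(s < d) (cos (2 * pi * s%:R / d%:R) +i* sin (2 * pi * s%:R / d%:R))
                  *: (col s E *m adjmx (col s E)) in
  let Phi (rho : 'M[R[i]]_d) : 'M[R[i]]_d :=
    \sum_(j < d) (lam j)%:C *: (mxpow V j *m rho *m adjmx (mxpow V j)) in
  forall rho : 'M[R[i]]_d,
    (* rho is in A: a convex combination of pure states |f><f| with
       |<f|e_s>| = 1/sqrt d for all s *)
    (exists (k : nat) (p : 'I_k -> R) (f : 'I_k -> 'cV[R[i]]_d),
        [/\ forall j, 0 <= p j, \sum_(j < k) p j = 1,
            forall j, adjmx (f j) *m f j = 1%:M,
            forall j (s : 'I_d),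
              `|(adjmx (f j) *m col s E) 0 0| = ((Num.sqrt (d%:R : R))^-1)%:C
          & rho = \sum_(j < k) (p j)%:C *: (f j *m adjmx (f j))]) ->
    HPhi_le Phi rho (- \sum_(j < d) lam j * ln (lam j)).
Proof.
move=> hE l0 l1 V Phi rho [k [p [f [p0 p1 fn fo ->]]]].
have hV : V = E *m diag_mx (\row_s om R d ^+ s) *m adjmx E by rewrite /V V_eq.
exists k, p, (fun j => f j *m adjmx (f j)); split => //.
- by move=> j; apply: density_pure.
rewrite -[X in _ <= X]mul1r -p1 mulr_suml; apply: ler_sum => j _.
apply: ler_wpM2l => //.
rewrite /Phi; exact: (@ent_core R d E hE lam V hV (f j) (fo j) l0 l1).
Qed.
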